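(* Let $(V_1,\dots,V_n)$ be an $n$-tuple of doubly non-commuting isometries on $H$, let $A=\{i_1,\dots,i_l\}\subseteq\{1,\dots,n\}$ be non-empty with $A^c=\{j_1,\dots,j_{n-l}\}$. Suppose $L$ is a subspace of $H_A$ invariant under $V_{j_1},\dots,V_{j_{n-l}}$ such that $H_A=\bigoplus_{k_{i_1},\dots,k_{i_l}\ge0}V_{i_1}^{k_{i_1}}\cdots V_{i_l}^{k_{i_l}}(L)$ as an orthogonal Hilbert direct sum. Then $L=W_A$.
   Context: Fix $n\ge1$ and $z_{ij}\in\mathbb T$ ($i\ne j$) with $z_{ji}=\overline{z_{ij}}$; $(V_1,\dots,V_n)$ is doubly non-commuting if the $V_i$ are isometries with $V_i^*V_j=\overline{z_{ij}}V_jV_i^*$ for $i\ne j$. For an isometry $S$: $H^{\mathrm{iso}}(S)=\bigoplus_{k\ge0}S^k(\ker S^* )$, $H^{\mathrm{uni}}(S)=\bigcap_{k\ge0}S^k(H)$. $H_A=\bigcap_{i\in A}H^{\mathrm{iso}}(V_i)\cap\bigcap_{i\in A^c}H^{\mathrm{uni}}(V_i)$ (intersection over empty index set $=H$). $W_A=\bigcap_{m_{j_1},\dots,m_{j_{n-l}}\ge0}V_{j_1}^{m_{j_1}}\cdots V_{j_{n-l}}^{m_{j_{n-l}}}\big(\bigcap_{i\in A}\ker V_i^*\big)$ (for $A=\{1,\dots,n\}$, $W_A=\bigcap_i\ker V_i^*$). Subspaces are closed. *)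

(* Defs.v *)
From HB Require Import structures.
From mathcomp Require Import all_boot all_order all_algebra.
From mathcomp Require Import complex.
From mathcomp Require Import boolp classical_sets reals.
Set Implicit Arguments. Unset Strict Implicit. Unset Printing Implicit Defensive.
Import Order.TTheory GRing.Theory Num.Theory.
Local Open Scope ring_scope.
Local Open Scope complex_scope.
Local Open Scope classical_set_scope.

Section Hilbert.
Variables (R : realType) (H : lmodType R[i]) (ip : H -> H -> R[i]).

Definition is_inner_product : Prop :=
  [/\ forall (a : R[i]) (x y z : H), ip (a *: x + y) z = a * ip x z + ip y z,
      forall x y : H, ip y x = (ip x y)^*,
      forall x : H, 0 <= ip x x
    & forall x : H, ip x x = 0 -> x = 0].

Definition hnorm (x : H) : R[i] := sqrtc (ip x x).

Definition hconverges (u : nat -> H) (x : H) : Prop :=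
  forall e : R[i], 0 < e -> exists N : nat,
    forall m : nat, (N <= m)%N -> hnorm (u m - x) < e.

Definition hcauchy (u : nat -> H) : Prop :=
  forall e : R[i], 0 < e -> exists N : nat,
    forall m k : nat, (N <= m)%N -> (N <= k)%N -> hnorm (u m - u k) < e.

Definition hcomplete : Prop :=
  forall u : nat -> H, hcauchy u -> exists x : H, hconverges u x.

Definition hclosure (S : set H) : set H :=
  [set x | exists u : nat -> H, (forall k, S (u k)) /\ hconverges u x].

Definition hclosed (S : set H) : Prop := hclosure S `<=` S.

Definition is_subspace (S : set H) : Prop :=
  [/\ S 0, (forall (a : R[i]) (x y : H), S x -> S y -> S (a *: x + y))
    & hclosed S].

Definition finsums (I : Type) (D : set I) (M : I -> set H) : set H :=
  [set x | exists (s : seq I) (f : I -> H),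
     [/\ forall k, D k -> M k (f k),
         forall k, ~ D k -> f k = 0
       & x = \sum_(k <- s) f k]].

(* closed linear span of the family (M k)_{k in D}; when the family is
   orthogonal this is the Hilbert (orthogonal) direct sum  (+)_{k in D} M k *)
Definition hsum (I : Type) (D : set I) (M : I -> set H) : set H :=
  hclosure (finsums D M).

Definition orth_family (I : Type) (D : set I) (M : I -> set H) : Prop :=
  forall k k', D k -> D k' -> k <> k' ->
    forall x y, M k x -> M k' y -> ip x y = 0.

Definition is_isometry (V : H -> H) : Prop :=
  linear V /\ forall x y, ip (V x) (V y) = ip x y.

Definition is_adjoint (V Vs : H -> H) : Prop :=
  forall x y, ip (V x) y = ip x (Vs y).

Definition kerO (T : H -> H) : set H := [set x | T x = 0].

(* H^iso(S) = (+)_{k>=0} S^k (ker S^* ), with Sa the adjoint of S *)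
Definition Hiso (S Sa : H -> H) : set H :=
  hsum [set: nat] (fun k => iter k S @` kerO Sa).

Definition Huni (S : H -> H) : set H :=
  [set x | forall k : nat, exists y, x = iter k S y].

Variable n : nat.

Definition doubly_noncommuting (V Vs : 'I_n -> H -> H)
  (z : 'I_n -> 'I_n -> R[i]) : Prop :=
  [/\ forall i, is_isometry (V i),
      forall i, is_adjoint (V i) (Vs i),
      forall i j, i != j -> `|z i j| = 1 /\ z j i = (z i j)^*
    & forall i j, i != j -> forall x,
        Vs i (V j x) = (z i j)^* *: V j (Vs i x)].

(* V_{s_1}^{m s_1} ... V_{s_r}^{m s_r} x  for s = [:: s_1; ...; s_r] *)
Definition prodpow (V : 'I_n -> H -> H) (s : seq 'I_n) (m : 'I_n -> nat)
  (x : H) : H :=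
  foldr (fun i y => iter (m i) (V i) y) x s.

Definition HA (V Vs : 'I_n -> H -> H) (A : {set 'I_n}) : set H :=
  [set x | (forall i, i \in A -> Hiso (V i) (Vs i) x) /\
           (forall i, i \notin A -> Huni (V i) x)].

(* W_A = \bigcap_{m} V_{j_1}^{m_{j_1}} ... V_{j_{n-l}}^{m_{j_{n-l}}}
          (\bigcap_{i in A} ker V_i^* ), j_1 < ... < j_{n-l} enumerating A^c *)
Definition WA (V Vs : 'I_n -> H -> H) (A : {set 'I_n}) : set H :=
  [set x | forall m : 'I_n -> nat, exists y,
     (forall i, i \in A -> Vs i y = 0) /\ x = prodpow V (enum (~: A)) m y].

(* index set of tuples (k_i)_{i in A}: functions vanishing off A *)
Definition supported_on (A : {set 'I_n}) : set ('I_n -> nat) :=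
  [set k | forall i, i \notin A -> k i = 0%N].

End Hilbert.

(* Main.v *)
Require Import Defs.
From HB Require Import structures.
From mathcomp Require Import all_boot all_order all_algebra.
From mathcomp Require Import complex.
From mathcomp Require Import boolp classical_sets reals.
From mathcomp Require Import ring.
Import Order.TTheory GRing.Theory Num.Theory.
Local Open Scope ring_scope.
Local Open Scope complex_scope.
Local Open Scope classical_set_scope.
Set Implicit Arguments. Unset Strict Implicit. Unset Printing Implicit Defensive.

Lemma conjM (R : realType) (a b : R[i]) : (a * b)^*%C = a^*%C * b^*%C.
Proof. exact: rmorphM. Qed.
Lemma conjD (R : realType) (a b : R[i]) : (a + b)^*%C = a^*%C + b^*%C.
Proof. exact: rmorphD. Qed.
Lemma conjN (R : realType) (a : R[i]) : (- a)^*%C = - a^*%C.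
Proof. exact: rmorphN. Qed.
Lemma conj0 (R : realType) : (0 : R[i])^*%C = 0.
Proof. exact: rmorph0. Qed.

Section IP.
Variables (R : realType) (H : lmodType R[i]) (ip : H -> H -> R[i]).
Hypothesis hip : is_inner_product ip.

Lemma ipDZl a x y w : ip (a *: x + y) w = a * ip x w + ip y w.
Proof. by case: hip. Qed.
Lemma ipC x y : ip y x = (ip x y)^*%C.
Proof. by case: hip. Qed.
Lemma ip_ge0 x : 0 <= ip x x.
Proof. by case: hip. Qed.
Lemma ip_eq0 x : ip x x = 0 -> x = 0.
Proof. by case: hip => _ _ _ h; apply: h. Qed.

Lemma ip0l w : ip 0 w = 0.
Proof.
have := ipDZl 1 0 0 w; rewrite scaler0 addr0 mul1r => e.
by rewrite -(subrr (ip 0 w)) {2}e addrK.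
Qed.
Lemma ipDl x y w : ip (x + y) w = ip x w + ip y w.
Proof. by have := ipDZl 1 x y w; rewrite scale1r mul1r. Qed.
Lemma ipZl a x w : ip (a *: x) w = a * ip x w.
Proof. by have := ipDZl a x 0 w; rewrite addr0 ip0l addr0. Qed.
Lemma ipNl x w : ip (- x) w = - ip x w.
Proof. by rewrite -scaleN1r ipZl mulN1r. Qed.
Lemma ipBl x y w : ip (x - y) w = ip x w - ip y w.
Proof. by rewrite ipDl ipNl. Qed.
Lemma ip0r x : ip x 0 = 0.
Proof. by rewrite ipC ip0l rmorph0. Qed.
Lemma ipDr x y w : ip w (x + y) = ip w x + ip w y.
Proof. rewrite [LHS]ipC ipDl rmorphD (ipC x w) (ipC y w); reflexivity. Qed.
Lemma ipZr a x w : ip w (a *: x) = a^*%C * ip w x.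
Proof. rewrite [LHS]ipC ipZl rmorphM (ipC x w); reflexivity. Qed.
Lemma ipNr x w : ip w (- x) = - ip w x.
Proof. rewrite [LHS]ipC ipNl rmorphN (ipC x w); reflexivity. Qed.
Lemma ipBr x y w : ip w (x - y) = ip w x - ip w y.
Proof. by rewrite ipDr ipNr. Qed.
Lemma ip_real x : (ip x x)^*%C = ip x x.
Proof. by rewrite -ipC. Qed.

Lemma ip_suml (I : Type) (s : seq I) (P : pred I) (F : I -> H) w :
  ip (\sum_(k <- s | P k) F k) w = \sum_(k <- s | P k) ip (F k) w.
Proof.
elim: s => [|a s IH]; first by rewrite !big_nil ip0l.
rewrite !big_cons; case: (P a) => //; by rewrite ipDl IH.
Qed.

Lemma ortho0 x : (forall u, ip u x = 0) -> x = 0.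
Proof. by move=> h; apply: ip_eq0; apply: h. Qed.

Lemma hnorm_ge0 x : 0 <= hnorm ip x.
Proof. by rewrite /hnorm sqrtc_ge0 ip_ge0. Qed.

Lemma hnorm_le x y : ip x x <= ip y y -> hnorm ip x <= hnorm ip y.
Proof.
move=> h; rewrite -ler_sqr ?nnegrE ?hnorm_ge0 //.
by rewrite /hnorm !sqr_sqrtc.
Qed.

Lemma pyth u b : ip u b = 0 -> hnorm ip u <= hnorm ip (u + b).
Proof.
move=> hub; apply: hnorm_le.
rewrite ipDl !ipDr hub (ipC u b) hub rmorph0 add0r addr0.
by rewrite lerDl ip_ge0.
Qed.

Lemma hnormN x : hnorm ip (- x) = hnorm ip x.
Proof. by rewrite /hnorm ipNl ipNr opprK. Qed.

Lemma hnorm0 : hnorm ip 0 = 0.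
Proof. by rewrite /hnorm ip0l sqrtc0. Qed.

Lemma hnorm_small x : (forall e, 0 < e -> hnorm ip x < e) -> x = 0.
Proof.
move=> h; apply: ip_eq0; case: (eqVneq (ip x x) 0) => // nz.
have hp : 0 < hnorm ip x.
  by rewrite lt_def hnorm_ge0 andbT /hnorm sqrtc_eq0.
by have := h _ hp; rewrite ltxx.
Qed.

End IP.

Section Ops.
Variables (R : realType) (H : lmodType R[i]) (ip : H -> H -> R[i]) (n : nat).
Variables (V Vs : 'I_n -> H -> H) (z : 'I_n -> 'I_n -> R[i]).
Hypothesis hip : is_inner_product ip.
Hypothesis hdn : doubly_noncommuting ip V Vs z.

Lemma VZD i a x y : V i (a *: x + y) = a *: V i x + V i y.
Proof. by case: hdn => h _ _ _; case: (h i) => hl _; apply: hl. Qed.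
Lemma V0 i : V i 0 = 0.
Proof. by have := VZD i 1 0 0; rewrite scaler0 addr0 scale1r => e;
  apply: (addrI (V i 0)); rewrite addr0 -e. Qed.
Lemma VD i x y : V i (x + y) = V i x + V i y.
Proof. by have := VZD i 1 x y; rewrite !scale1r. Qed.
Lemma VZ i a x : V i (a *: x) = a *: V i x.
Proof. by have := VZD i a x 0; rewrite !addr0 V0 addr0. Qed.
Lemma Visom i x y : ip (V i x) (V i y) = ip x y.
Proof. by case: hdn => h _ _ _; case: (h i) => _ hl; apply: hl. Qed.
Lemma Vadj i x y : ip (V i x) y = ip x (Vs i y).
Proof. by case: hdn => _ h _ _; apply: h. Qed.
Lemma VsVc i j x : i != j -> Vs i (V j x) = (z i j)^*%C *: V j (Vs i x).
Proof. by case: hdn => _ _ _ h ij; apply: h. Qed.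
Lemma zz1 i j : i != j -> z i j * (z i j)^*%C = 1.
Proof. by case: hdn => _ _ h _ ij; case: (h i j ij) => h1 _; rewrite -sqr_normc h1 expr1n. Qed.

Lemma VsV i x : Vs i (V i x) = x.
Proof.
apply/eqP; rewrite -subr_eq0; apply/eqP; apply: (ortho0 hip) => u.
by rewrite (ipBr hip) -Vadj Visom subrr.
Qed.

Lemma VsZD i a x y : Vs i (a *: x + y) = a *: Vs i x + Vs i y.
Proof.
apply/eqP; rewrite -subr_eq0; apply/eqP; apply: (ortho0 hip) => u.
by rewrite (ipBr hip) -Vadj (ipDr hip) (ipZr hip) (ipDr hip) (ipZr hip) -!Vadj subrr.
Qed.
Lemma Vs0 i : Vs i 0 = 0.
Proof. by have := VsZD i 1 0 0; rewrite scaler0 addr0 scale1r => e;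
  apply: (addrI (Vs i 0)); rewrite addr0 -e. Qed.
Lemma VsD i x y : Vs i (x + y) = Vs i x + Vs i y.
Proof. by have := VsZD i 1 x y; rewrite !scale1r. Qed.
Lemma VsZ i a x : Vs i (a *: x) = a *: Vs i x.
Proof. by have := VsZD i a x 0; rewrite !addr0 Vs0 addr0. Qed.
Lemma VsN i x : Vs i (- x) = - Vs i x.
Proof. by rewrite -scaleN1r VsZ scaleN1r. Qed.
Lemma VsB i x y : Vs i (x - y) = Vs i x - Vs i y.
Proof. by rewrite VsD VsN. Qed.

Lemma VVc i j x : i != j -> V j (V i x) = (z i j)^*%C *: V i (V j x).
Proof.
move=> ij; set c := (z i j)^*%C; set a := V j (V i x); set b := V i (V j x).
apply/eqP; rewrite -subr_eq0; apply/eqP; apply: (ip_eq0 hip).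
have Hsa : Vs i a = c *: V j x by rewrite /a VsVc // VsV.
have hba : ip b a = c^*%C * ip x x.
  by rewrite /b Vadj Hsa (ipZr hip) Visom.
have hab : ip a b = c * ip x x.
  by rewrite (ipC hip) hba conjM conjcK (ip_real hip).
have haa : ip a a = ip x x by rewrite /a !Visom.
have hbb : ip b b = ip x x by rewrite /b !Visom.
have hcc : c * c^*%C = 1 by rewrite /c conjcK mulrC zz1.
rewrite (ipBl hip) !(ipBr hip) !(ipZl hip) !(ipZr hip) haa hbb hab hba.
transitivity (ip x x * (1 - c * c^*%C)); first by ring.
by rewrite hcc subrr mulr0.
Qed.

Lemma VsVs0 i j w : i != j -> Vs i w = 0 -> Vs i (Vs j w) = 0.
Proof.
move=> ij hw; apply: (ortho0 hip) => u.
rewrite -!Vadj.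
by rewrite (VVc u ij) (ipZl hip) Vadj hw (ip0r hip) mulr0.
Qed.

Lemma Vs_contr i v : hnorm ip (Vs i v) <= hnorm ip v.
Proof.
have -> : hnorm ip (Vs i v) = hnorm ip (V i (Vs i v)) by rewrite /hnorm Visom.
have := pyth hip (u:=V i (Vs i v)) (b:= v - V i (Vs i v)).
rewrite [_ + (_ - _)]addrC subrK; apply.
by rewrite (ipBr hip) Vadj Visom subrr.
Qed.

Lemma iterVZ i k c x : iter k (V i) (c *: x) = c *: iter k (V i) x.
Proof. by elim: k => //= k ->; rewrite VZ. Qed.
Lemma iterV0 i k : iter k (V i) 0 = 0.
Proof. by elim: k => //= k ->; rewrite V0. Qed.
Lemma Vs_iterV i j k x : i != j ->
  Vs i (iter k (V j) x) = ((z i j)^*%C ^+ k) *: iter k (V j) (Vs i x).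
Proof.
move=> ij; elim: k => [|k IH] /=; first by rewrite expr0 scale1r.
by rewrite VsVc // IH VZ scalerA exprS.
Qed.
Lemma Vs_iterVS i k x : Vs i (iter k.+1 (V i) x) = iter k (V i) x.
Proof. by rewrite /= VsV. Qed.
Lemma V_iterV i j k x : j != i ->
  V i (iter k (V j) x) = ((z j i)^*%C ^+ k) *: iter k (V j) (V i x).
Proof.
move=> ji; elim: k => [|k IH] /=; first by rewrite expr0 scale1r.
by rewrite VVc // IH VZ scalerA exprS.
Qed.

End Ops.

Section Prod.
Variables (R : realType) (H : lmodType R[i]) (ip : H -> H -> R[i]) (n : nat).
Variables (V Vs : 'I_n -> H -> H) (z : 'I_n -> 'I_n -> R[i]).
Hypothesis hip : is_inner_product ip.
Hypothesis hdn : doubly_noncommuting ip V Vs z.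

Lemma prodpow_nil k w : prodpow V [::] k w = w.
Proof. by []. Qed.
Lemma prodpow_cons a s k w :
  prodpow V (a :: s) k w = iter (k a) (V a) (prodpow V s k w).
Proof. by []. Qed.

Lemma prodpowZ s k c w : prodpow V s k (c *: w) = c *: prodpow V s k w.
Proof.
elim: s => [|a s IH]; first by [].
by rewrite !prodpow_cons IH (iterVZ hdn).
Qed.

Lemma prodpow0 s w : prodpow V s (fun _ => 0%N) w = w.
Proof. by elim: s => [|a s IH] //; rewrite prodpow_cons IH. Qed.

Lemma eq_prodpow s k k' w : (forall t, t \in s -> k t = k' t) ->
  prodpow V s k w = prodpow V s k' w.
Proof.
elim: s => [|a s IH] // h; rewrite !prodpow_cons h ?mem_head // IH // => t ts.
by apply: h; rewrite in_cons ts orbT.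
Qed.

Lemma prodpow_notin i s k w : i \notin s ->
  exists c, V i (prodpow V s k w) = c *: prodpow V s k (V i w).
Proof.
elim: s => [|a s IH]; first by exists 1; rewrite scale1r.
rewrite in_cons negb_or => /andP [ia nis]; case: (IH nis) => c hc.
have ai : a != i by rewrite eq_sym.
exists ((z a i)^*%C ^+ (k a) * c).
by rewrite !prodpow_cons (V_iterV hip hdn) // hc (iterVZ hdn) scalerA.
Qed.

Definition bump (k : 'I_n -> nat) (i : 'I_n) : 'I_n -> nat :=
  fun t => if t == i then (k t).+1 else k t.

Lemma prodpow_in i s k w : uniq s -> i \in s ->
  exists c, V i (prodpow V s k w) = c *: prodpow V s (bump k i) w.
Proof.
elim: s => [|a s IH] // hu; have /andP [nas us] : (a \notin s) && uniq s := hu.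
rewrite in_cons; case: (eqVneq i a) => [->|ia] hin.
  exists 1; rewrite scale1r !prodpow_cons /bump eqxx.
  rewrite -(@eq_prodpow s k) //= => t ts.
  by case: (eqVneq t a) => // ta; move: nas; rewrite -ta ts.
case: (IH us hin) => c hc.
have ai : a != i by rewrite eq_sym.
exists ((z a i)^*%C ^+ (k a) * c).
rewrite !prodpow_cons (V_iterV hip hdn) // hc (iterVZ hdn) scalerA.
by rewrite {2}/bump (negbTE ai).
Qed.

Lemma prodpow_single j s m y : uniq s -> j \in s ->
  prodpow V s (fun t => if t == j then m else 0%N) y = iter m (V j) y.
Proof.
elim: s => [|a s IH] // hu; have /andP [nas us] : (a \notin s) && uniq s := hu.
rewrite in_cons; case: (eqVneq j a) => [->|ja] hin.
  rewrite prodpow_cons eqxx (@eq_prodpow s _ (fun _ => 0%N)) ?prodpow0 // => t ts.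
  by case: (eqVneq t a) => // ta; move: nas; rewrite -ta ts.
by rewrite prodpow_cons eq_sym (negbTE ja) /= IH.
Qed.

Lemma prodpow_head s k w : (exists i, i \in s /\ k i <> 0%N) ->
  exists i v, i \in s /\ prodpow V s k w = V i v.
Proof.
elim: s => [|a s IH]; first by case=> i [].
move=> [i [his hki]]; rewrite prodpow_cons.
case e: (k a) => [|m].
  have his' : i \in s.
    move: his; rewrite in_cons; case/orP => // /eqP ia.
    by move: hki; rewrite ia e.
  case: IH; first by exists i.
  move=> i' [v [h1 h2]]; exists i', v; split; last exact: h2.
  by rewrite in_cons h1 orbT.
by exists a, (iter m (V a) (prodpow V s k w)); split; first exact: mem_head.
Qed.

End Prod.

Section Main.
Variables (R : realType) (H : lmodType R[i]) (ip : H -> H -> R[i]) (n : nat).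
Variables (V Vs : 'I_n -> H -> H) (z : 'I_n -> 'I_n -> R[i]).
Variables (A : {set 'I_n}) (L : set H).
Hypothesis hip : is_inner_product ip.
Hypothesis hdn : doubly_noncommuting ip V Vs z.
Hypothesis hL : is_subspace ip L.
Hypothesis hLsub : L `<=` HA ip V Vs A.
Hypothesis hinv : forall j, j \notin A -> forall x, L x -> L (V j x).
Hypothesis horth :
  orth_family ip (supported_on A) (fun k => prodpow V (enum A) k @` L).
Hypothesis hHA :
  HA ip V Vs A = hsum ip (supported_on A) (fun k => prodpow V (enum A) k @` L).

Definition isz (k : 'I_n -> nat) : bool := [forall t, k t == 0%N].

Lemma isz_eq k : isz k -> k = (fun _ => 0%N).
Proof. by move=> h; apply: funext => t; apply/eqP; move/forallP: h; apply. Qed.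

Lemma L0 : L 0.
Proof. by case: hL. Qed.
Lemma LD x y : L x -> L y -> L (x + y).
Proof. by case: hL => _ h _ hx hy; have := h 1 x y hx hy; rewrite scale1r. Qed.

Lemma L_sum (I : Type) (s : seq I) (P : pred I) (F : I -> H) :
  (forall k, P k -> L (F k)) -> L (\sum_(k <- s | P k) F k).
Proof.
move=> h; elim: s => [|a s IH]; first by rewrite big_nil; exact: L0.
rewrite big_cons; case e: (P a) => //; apply: LD => //; exact: h.
Qed.

Lemma supp0 : supported_on A (fun _ => 0%N).
Proof. by []. Qed.

Lemma orthL k l a : supported_on A k -> ~~ isz k -> L l -> L a ->
  ip (prodpow V (enum A) k l) a = 0.
Proof.
move=> sk nz Ll La; apply: (horth sk supp0).
- by move=> e; move: nz; rewrite e; case/negP; apply/forallP.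
- by exists l.
- by exists a => //; rewrite prodpow0.
Qed.

Lemma orthR k l a : supported_on A k -> ~~ isz k -> L l -> L a ->
  ip a (prodpow V (enum A) k l) = 0.
Proof. by move=> sk nz Ll La; rewrite (ipC hip) orthL // conj0. Qed.

Lemma KL y : HA ip V Vs A y ->
  (forall k, supported_on A k -> ~~ isz k -> forall l, L l ->
     ip y (prodpow V (enum A) k l) = 0) -> L y.
Proof.
move=> hy hort; rewrite hHA in hy; case: hy => u [hu hc].
have step : forall m, exists a, L a /\ hnorm ip (a - y) <= hnorm ip (u m - y).
  move=> m; case: (hu m) => s [f [hf1 hf0 hum]].
  pose a := \sum_(k <- s | isz k) f k.
  pose b := \sum_(k <- s | ~~ isz k) f k.
  have hab : u m = a + b by rewrite hum /a /b (bigID isz).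
  have La : L a.
    apply: L_sum => k hk; have ek := isz_eq hk.
    have sk : supported_on A k by rewrite ek.
    have [l Ll <-] := hf1 k sk.
    by rewrite ek prodpow0.
  exists a; split => //.
  have orth : ip (y - a) (- b) = 0.
    rewrite (ipNr hip) (ipC hip) /b (ip_suml hip) big1_seq ?conj0 ?oppr0 //.
    move=> k /andP [nz _]; rewrite (ipBr hip).
    case: (pselect (supported_on A k)) => sk.
      have [l Ll <-] := hf1 k sk.
      by rewrite (ipC hip y) hort // conj0 orthL // subrr.
    by rewrite hf0 // !(ip0l hip) subrr.
  have := pyth hip orth => h.
  rewrite -(hnormN hip) opprB (le_trans h) //.
  by rewrite -(hnormN hip (u m - y)) opprB hab opprD addrA.
case: (choice step) => g hg.
case: hL => _ _ hcl; apply: hcl; exists g; split; first by move=> m; case: (hg m).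
move=> e he; case: (hc e he) => N hN; exists N => m hm.
by case: (hg m) => _ h; apply: le_lt_trans h (hN m hm).
Qed.

Lemma Vs_sum t (I : Type) (s : seq I) (P : pred I) (F : I -> H) :
  Vs t (\sum_(k <- s | P k) F k) = \sum_(k <- s | P k) Vs t (F k).
Proof.
elim: s => [|a s IH]; first by rewrite !big_nil (Vs0 hip hdn).
by rewrite !big_cons; case: (P a) => //; rewrite (VsD hip hdn) IH.
Qed.

Lemma hclosure_Vs t (S : set H) x : (forall v, S v -> S (Vs t v)) ->
  hclosure ip S x -> hclosure ip S (Vs t x).
Proof.
move=> hS [u [hu hc]]; exists (fun m => Vs t (u m)); split.
  by move=> m; apply: hS; apply: hu.
move=> e he.
case: (hc e he) => N hN; exists N => m hm.
by rewrite -(VsB hip hdn); apply: le_lt_trans (Vs_contr hip hdn _ _) (hN m hm).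
Qed.

Lemma Hiso_Vs t i x : Hiso ip (V i) (Vs i) x -> Hiso ip (V i) (Vs i) (Vs t x).
Proof.
apply: hclosure_Vs => v [s [f [hf1 hf0 ->]]].
case: (eqVneq t i) => [->|ti].
  exists (map predn (filter (fun k => 0 < k)%N s)), (fun k => Vs i (f k.+1)).
  split.
  - move=> k _; have [w hw <-] := hf1 k.+1 I.
    by exists w => //; rewrite (Vs_iterVS hip hdn).
  - by move=> k /(_ I) [].
  rewrite Vs_sum big_map big_filter [LHS](bigID (fun k => 0 < k)%N) /=.
  rewrite [X in _ + X]big1 ?addr0.
    by apply: eq_bigr => k hk; rewrite prednK.
  move=> k; rewrite -eqn0Ngt => /eqP ->.
  have [w hw <-] := hf1 0%N I; exact: hw.
exists s, (fun k => Vs t (f k)); split.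
- move=> k _; have [w hw <-] := hf1 k I.
  have hw' : Vs i w = 0 := hw.
  exists ((z t i)^*%C ^+ k *: Vs t w).
    by rewrite /kerO /= (VsZ hip hdn) (VsVs0 hip hdn) ?scaler0 // eq_sym.
  by rewrite (iterVZ hdn) (Vs_iterV hdn).
- by move=> k /(_ I) [].
by rewrite Vs_sum.
Qed.

Lemma Huni_Vs t j x : Huni (V j) x -> Huni (V j) (Vs t x).
Proof.
move=> hx k; case: (eqVneq t j) => [->|tj].
  by case: (hx k.+1) => y ->; exists y; rewrite (Vs_iterVS hip hdn).
case: (hx k) => y ->; exists ((z t j)^*%C ^+ k *: Vs t y).
by rewrite (iterVZ hdn) (Vs_iterV hdn).
Qed.

Lemma Vs_HA t x : HA ip V Vs A x -> HA ip V Vs A (Vs t x).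
Proof.
move=> [h1 h2]; split => i hi; first exact: Hiso_Vs (h1 i hi).
exact: Huni_Vs (h2 i hi).
Qed.

Lemma L_ker l i : L l -> i \in A -> Vs i l = 0.
Proof.
move=> Ll hi.
have C : forall k, supported_on A k -> forall l', L l' ->
    ip (Vs i l) (prodpow V (enum A) k l') = 0.
  move=> k sk l' Ll'; rewrite (ipC hip) -(Vadj hdn).
  have iA : i \in enum A by rewrite mem_enum.
  have [c ->] := prodpow_in hip hdn k l' (enum_uniq (mem A)) iA.
  rewrite (ipZl hip) orthL ?mulr0 ?conj0 //.
  - move=> t ht; rewrite /bump.
    have -> : (t == i) = false.
      by apply/negP => /eqP e; move: ht; rewrite e hi.
    exact: sk.
  - apply/negP => /forallP /(_ i) /eqP; rewrite /bump eqxx //.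
have Ly : L (Vs i l).
  apply: KL; first exact: Vs_HA (hLsub Ll).
  by move=> k sk _ l' Ll'; apply: C.
apply: (ip_eq0 hip).
by have := C (fun _ => 0%N) supp0 _ Ly; rewrite prodpow0.
Qed.

Lemma L_back l j : L l -> j \notin A -> exists y, L y /\ l = V j y.
Proof.
move=> Ll hj; have [_ hu] := hLsub Ll.
case: (hu j hj 1%N) => y0 hy0; have hy : l = V j y0 := hy0.
exists y0; split => //.
have ey : y0 = Vs j l by rewrite hy (VsV hip hdn).
apply: KL; first by rewrite ey; apply: Vs_HA; apply: hLsub.
move=> k sk nz l' Ll'; rewrite -(Visom hdn j) -hy.
have jA : j \notin enum A by rewrite mem_enum.
have [c ->] := prodpow_notin hip hdn k l' jA.
by rewrite (ipZr hip) orthR ?mulr0 //; apply: hinv.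
Qed.

Lemma L_pow s : (forall j, j \in s -> j \notin A) ->
  forall m l, L l -> exists y, L y /\ l = prodpow V s m y.
Proof.
elim: s => [|a s IH] hs m l Ll; first by exists l.
have iterb : forall k l0, L l0 -> exists y, L y /\ l0 = iter k (V a) y.
  elim=> [|k IHk] l0 Ll0; first by exists l0.
  case: (IHk l0 Ll0) => y1 [Ly1 ->].
  case: (L_back Ly1 (hs a (mem_head _ _))) => y2 [Ly2 ->].
  by exists y2; split => //; rewrite iterSr.
case: (iterb (m a) l Ll) => y1 [Ly1 ->].
case: (IH _ m y1 Ly1) => [j hj|y2 [Ly2 ->]].
  by apply: hs; rewrite in_cons hj orbT.
by exists y2; split.
Qed.

Lemma main_eq : L = WA V Vs A.
Proof.
apply/seteqP; split => x hx.
  move=> m; case: (@L_pow (enum (~: A)) _ m x hx) => [j|y [Ly ->]].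
    by rewrite mem_enum finset.in_setC.
  by exists y; split => // i hi; apply: L_ker.
have [y0 [hy0 e0]] := hx (fun _ => 0%N).
rewrite prodpow0 in e0; subst y0.
have HAx : HA ip V Vs A x.
  split.
    move=> i hi; exists (fun _ => x); split.
      move=> _; exists [:: 0%N], (fun k => if k == 0%N then x else 0); split.
      - move=> k _; case: (eqVneq k 0%N) => [->|k0].
          by exists x => //; apply: hy0.
        by exists 0; [rewrite /kerO /= (Vs0 hip hdn) | rewrite (iterV0 hdn)].
      - by move=> k /(_ I) [].
      by rewrite big_cons big_nil eqxx addr0.
    by move=> e he; exists 0%N => m _; rewrite subrr (hnorm0 hip).
  move=> j hj k; case: (hx (fun t => if t == j then k else 0%N)) => y [_ ->].
  exists y; apply: prodpow_single; first exact: enum_uniq.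
  by rewrite mem_enum finset.in_setC.
apply: KL HAx _ => k sk nz l Ll.
have [|i [v [hi ->]]] := @prodpow_head _ _ _ V (enum A) k l.
  move/forallPn: nz => [t ht]; exists t; split; last by apply/eqP.
  rewrite mem_enum; apply/negPn/negP => htA.
  by move: ht; rewrite sk.
rewrite (ipC hip) (Vadj hdn) hy0 ?(ip0r hip) ?conj0 //.
by move: hi; rewrite mem_enum.
Qed.

End Main.

Unset Implicit Arguments.

Theorem proposition3p9 (R : realType) (H : lmodType R[i])
  (ip : H -> H -> R[i]) (n : nat)
  (V Vs : 'I_n -> H -> H) (z : 'I_n -> 'I_n -> R[i])
  (A : {set 'I_n}) (L : set H) :
  is_inner_product ip -> hcomplete ip -> (0 < n)%N ->
  doubly_noncommuting ip V Vs z ->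
  A != finset.set0 :> {set 'I_n} ->
  is_subspace ip L ->
  L `<=` HA ip V Vs A ->
  (forall j, j \notin A -> forall x, L x -> L (V j x)) ->
  orth_family ip (supported_on A) (fun k => prodpow V (enum A) k @` L) ->
  HA ip V Vs A = hsum ip (supported_on A) (fun k => prodpow V (enum A) k @` L) ->
  L = WA V Vs A.
Proof.
move=> hip _ _ hdn _ hL hLsub hinv horth hHA.
exact: (main_eq hip hdn hL hLsub hinv horth hHA).
Qed.
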